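(* For all integers $k,n\ge 0$, $$\sum_{i=0}^{n}\sum_{j=0}^{n-i}(-1)^i\binom{n-i}{j}\binom{k}{i}\binom{k}{j}=1.$$ *)

(* Defs.v *)
From mathcomp Require Import all_boot all_order all_algebra.
Set Implicit Arguments. Unset Strict Implicit. Unset Printing Implicit Defensive.

(* Main.v *)
Require Import Defs.
From mathcomp Require Import all_boot all_order all_algebra.
Import GRing.Theory.
Local Open Scope ring_scope.

Lemma inner_sum (k m : nat) :
  (\sum_(0 <= j < m.+1) 'C(m, j) * 'C(k, j) = 'C(m + k, m))%N.
Proof.
rewrite big_nat_rev /=.
rewrite (@eq_big_nat _ _ _ _ _ _ (fun j => 'C(m, j) * 'C(k, m - j))%N); last first.
  move=> j /andP[_ hj]; by rewrite add0n subSS bin_sub.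
by rewrite big_mkord binomial.Vandermonde.
Qed.

Lemma Vgen (k : nat) : forall d n : nat,
  \sum_(0 <= i < n.+1) ((-1) ^+ i * ('C(k, i) * 'C(n - i + k + d, n - i))%:R : int)
  = ('C(n + d, n))%:R.
Proof.
elim: k => [|k IH] d n.
  rewrite big_nat_recl // big1_seq ?addr0; last first.
    by move=> i /andP[_ hi]; rewrite bin0n /= mul0n mulr0.
  by rewrite expr0 mul1r bin0 mul1n subn0 addn0.
rewrite big_nat_recl //.
under eq_bigr => i _ do rewrite binS mulnDl natrD mulrDr.
rewrite big_split /= addrA.
have E1 := IH d.+1 n.
rewrite big_nat_recl // in E1.
have -> : (-1) ^+ 0 * ('C(k.+1, 0) * 'C(n - 0 + k.+1 + d, n - 0))%:R +
   \sum_(0 <= i < n) (-1) ^+ i.+1 * ('C(k, i.+1) * 'C(n - i.+1 + k.+1 + d, n - i.+1))%:R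
   = ('C(n + d.+1, n))%:R :> int.
  rewrite -E1 !bin0; congr (_ + _); first by rewrite -!addnA addSnnS.
  by apply: eq_big_nat => i _; rewrite -!addnA addSnnS.
case: n E1 => [|m] E1.
  by rewrite big_geq // addr0 !bin0.
have E2 := IH d.+1 m.
rewrite (@eq_big_nat _ _ _ _ _ _ (fun i => - ((-1) ^+ i * ('C(k, i) * 'C(m - i + k + d.+1, m - i))%:R : int))); last first.
  move=> i /andP[_ hi]; rewrite exprS mulN1r mulNr; congr (- (_ * _%:R)).
  by rewrite subSS -!addnA addSnnS.
rewrite sumrN E2 addnS addSn binS natrD.
by rewrite -addnS addrK.
Qed.

Theorem corollary3p4 (k n : nat) :
  \sum_(0 <= i < n.+1) \sum_(0 <= j < (n - i).+1)
     ((-1) ^+ i * ('C(n - i, j) * 'C(k, i) * 'C(k, j))%:R : int) = 1.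
Proof.
transitivity ('C(n + 0, n)%:R : int); last by rewrite addn0 binn.
rewrite -(Vgen k 0 n).
apply: eq_bigr => i _.
rewrite -mulr_sumr; congr (_ * _).
rewrite -natr_sum; congr (_%:R).
rewrite addn0 -inner_sum big_distrr /=.
by apply: eq_bigr => j _; rewrite mulnCA mulnA.
Qed.
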